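(* Let $Q=(V,E)$ be a natural join query over binary relations, and let $I$ be an instance in which every relation has at most $N\ge1$ tuples. Let $U\subset V$. Suppose: (1) for every attribute $Y\in V\setminus U$ there is a relation $R(X,Y)\in E$ with $X\in U$; (2) every relation $R(X,Y)\in E$ with $X\in U$ and $Y\in V\setminus U$ is light in $X$ in $I$. Let $T$ be the relation obtained by computing $Q_U(I)$ and then joining it with all relations $R(X,Y)^I$ with $X\in U$, $Y\in V\setminus U$. Equivalently, $T$ is the natural join of all relations of $I$ having at least one attribute in $U$. Then $|T|\le\mathrm{AGM}(Q)$.
   Context: A natural join query over binary relations consists of relation symbols, each having exactly two distinct attributes; relations are sets of tuples. The query graph $(V,E)$ has one vertex per attribute and one edge per relation. For a relation $R$ with attribute $X$ and a value $a$, the degree is $d_R(a)=|\{t\in R:t.X=a\}|$. $R$ is light in $X$ if $d_R(a)\le\sqrt N$ for all $a$. For $U\subseteq V$, the induced subgraph query $Q_U$ consists of the projections $\pi_U R$ of all relations $R$ having at least one attribute in $U$. A fractional vertex packing is a map $u:V\to[0,1]$ with $u_x+u_y\le1$ for every edge $\{x,y\}\in E$. Define $\mathrm{AGM}(Q)=\max_u N^{\sum_{x\in V}u_x}$, the maximum taken over fractional vertex packings $u$. *)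

(* Defs.v *)
From HB Require Import structures.
From mathcomp Require Import all_boot all_order all_algebra.
From mathcomp Require Import classical_sets reals exp.
Set Implicit Arguments. Unset Strict Implicit. Unset Printing Implicit Defensive.
Import Order.TTheory GRing.Theory Num.Theory.
Local Open Scope ring_scope.
Local Open Scope classical_set_scope.

(* A binary natural join query: attributes [V], relation symbols [Rel];
   relation [r] has the two attributes [src r] and [dst r].
   An instance [inst] assigns to each relation a finite set of tuples,
   a tuple of [r] being the pair (value of src r, value of dst r). *)

Definition degree (V D Rel : finType) (src dst : Rel -> V)
  (inst : Rel -> {set D * D}) (r : Rel) (X : V) (a : D) : nat :=
  if X == src r then #|[set t in inst r | t.1 == a]|
  else #|[set t in inst r | t.2 == a]|.

Definition light (R : realType) (V D Rel : finType) (src dst : Rel -> V)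
  (inst : Rel -> {set D * D}) (N : nat) (r : Rel) (X : V) : Prop :=
  forall a : D, ((degree src dst inst r X a)%:R : R) <= Num.sqrt (N%:R : R).

Definition touches (V Rel : finType) (src dst : Rel -> V) (U : {set V}) (r : Rel)
  : bool := (src r \in U) || (dst r \in U).

Definition joinAttrs (V Rel : finType) (src dst : Rel -> V) (U : {set V})
  : {set V} :=
  [set x | [exists r, touches src dst U r && ((x == src r) || (x == dst r))]].

(* T = natural join of all relations having at least one attribute in U.
   A tuple over the attribute set W = joinAttrs is represented as a partial
   map V -> option D whose domain is exactly W. *)
Definition joinT (V D Rel : finType) (src dst : Rel -> V)
  (inst : Rel -> {set D * D}) (U : {set V}) : {set {ffun V -> option D}} :=
  [set g : {ffun V -> option D} |
     [forall x, (g x != None) == (x \in joinAttrs src dst U)] &&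
     [forall r, touches src dst U r ==>
        [exists p in inst r, (g (src r) == Some p.1) && (g (dst r) == Some p.2)]]].

Definition vertex_packing (R : realType) (V Rel : finType) (src dst : Rel -> V)
  (u : V -> R) : Prop :=
  (forall x, 0 <= u x <= 1) /\ (forall r, u (src r) + u (dst r) <= 1).

(* AGM(Q) = max over fractional vertex packings u of N^(sum_x u_x),
   written as a supremum (the max is attained). *)
Definition AGM (R : realType) (V Rel : finType) (src dst : Rel -> V) (N : nat) : R :=
  sup [set y : R | exists u : V -> R,
         vertex_packing src dst u /\ y = (N%:R : R) `^ (\sum_(x : V) u x)].

(* Main.v *)
Require Import Defs.
From HB Require Import structures.
From mathcomp Require Import all_boot all_order all_algebra.
From mathcomp Require Import classical_sets reals exp.
From mathcomp Require Import ring lra.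
From mathcomp Require Import fintype finset.
Import Order.TTheory GRing.Theory Num.Theory.

Module Helpers.
Set Implicit Arguments. Unset Strict Implicit. Unset Printing Implicit Defensive.

Section Hall.
Variables (W : finType) (adj : rel W).

Definition NB (Rt X : {set W}) : {set W} := [set y in Rt | [exists x in X, adj x y]].

Lemma NB_sub Rt (X : {set W}) : NB Rt X \subset Rt.
Proof. by apply/subsetP => y; rewrite inE => /andP[]. Qed.

Lemma NBS Rt (X Y : {set W}) : X \subset Y -> NB Rt X \subset NB Rt Y.
Proof.
move=> /subsetP XY; apply/subsetP => y; rewrite !inE => /andP[-> /existsP[x /andP[xX a]]].
by apply/existsP; exists x; rewrite XY.
Qed.

Lemma hall n : forall (L Rt : {set W}), #|L| <= n ->
  (forall X : {set W}, X \subset L -> #|X| <= #|NB Rt X|) ->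
  exists h : W -> W, (forall x, x \in L -> (h x \in Rt) && adj x (h x)) /\ {in L &, injective h}.
Proof.
elim: n => [|n IH] L Rt hL hH.
  by move: hL; rewrite leqn0 cards_eq0 => /eqP ->; exists id; split => [x|x y]; rewrite inE.
case: (boolP (L == set0)) => [/eqP -> | Lne].
  by exists id; split => [x|x y]; rewrite inE.
case: (boolP [exists X : {set W}, [&& X \subset L, X != set0, X != L & #|NB Rt X| <= #|X|]]).
- case/existsP => X0 /and4P[X0L X0n X0L' tight].
  have ltX0 : #|X0| < #|L| by rewrite proper_card // properEneq X0L' X0L.
  have [h1 [h1P h1I]] : exists h : W -> W, (forall x, x \in X0 -> (h x \in NB Rt X0) && adj x (h x)) /\ {in X0 &, injective h}.
    apply: (IH X0 (NB Rt X0)); first by rewrite -ltnS (leq_trans ltX0).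
    move=> X XX0; rewrite (leq_trans (hH X (subset_trans XX0 X0L))) //.
    apply: subset_leq_card; apply/subsetP => y; rewrite !inE => /andP[yR /existsP[x /andP[xX a]]].
    rewrite yR /=; apply/andP; split; apply/existsP; exists x; rewrite ?a ?(subsetP XX0) //.
    by rewrite xX.
  have ltL' : #|L :\: X0| < #|L|.
    rewrite cardsD (setIidPr X0L) ltn_subrL; apply/andP; split; last by rewrite card_gt0 Lne.
    by rewrite card_gt0.
  have [h2 [h2P h2I]] : exists h : W -> W, (forall x, x \in L :\: X0 -> (h x \in Rt :\: NB Rt X0) && adj x (h x)) /\ {in L :\: X0 &, injective h}.
    apply: (IH (L :\: X0) (Rt :\: NB Rt X0)); first by rewrite -ltnS (leq_trans ltL').
    move=> X XL.
    have XU : X :|: X0 \subset L by rewrite subUset X0L (subset_trans XL) // subsetDl.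
    have dj : [disjoint X & X0].
      rewrite -setI_eq0; apply/eqP/setP => x; rewrite !inE; apply/negbTE; apply/negP => /andP[xX xX0].
      by move: (subsetP XL x xX); rewrite inE xX0.
    have h3 := hH _ XU; rewrite cardsU (disjoint_setI0 dj) cards0 subn0 in h3.
    have h4 : NB Rt (X :|: X0) :\: NB Rt X0 \subset NB (Rt :\: NB Rt X0) X.
      apply/subsetP => y; rewrite !inE => /andP[yn /andP[yR /existsP[x /andP[]]]].
      rewrite inE => /orP[xX a|xX0 a]; last first.
        by move: yn; rewrite yR /=; move/negP; case; apply/existsP; exists x; rewrite xX0.
      by rewrite yn yR /=; apply/existsP; exists x; rewrite xX.
    apply: leq_trans (subset_leq_card h4).
    rewrite cardsD (setIidPr (NBS _ (subsetUr _ _))).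
    apply: (@leq_trans (#|X| + #|X0| - #|X0|)); first by rewrite addnK.
    exact: leq_sub.
  exists (fun x => if x \in X0 then h1 x else h2 x); split.
    move=> x xL; case: ifP => xX0.
      by case/andP: (h1P x xX0) => /(subsetP (NB_sub _ _)) -> ->.
    by case/andP: (h2P x ltac:(by rewrite inE xX0 xL)); rewrite inE => /andP[_ ->] ->.
  move=> x y xL yL /=; case: ifP => xX0; case: ifP => yX0.
  + exact: h1I.
  + move=> E; case/andP: (h1P x xX0) => hx _; case/andP: (h2P y ltac:(by rewrite inE yX0 yL)).
    by rewrite -E inE hx.
  + move=> E; case/andP: (h1P y yX0) => hy _; case/andP: (h2P x ltac:(by rewrite inE xX0 xL)).
    by rewrite E inE hy.
  + by apply: h2I; rewrite inE ?xX0 ?yX0 ?xL ?yL.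
- rewrite negb_exists => /forallP notight.
  case/set0Pn: Lne => x xL.
  have : 0 < #|NB Rt [set x]|.
    by apply: leq_trans (hH _ _); rewrite ?cards1 // sub1set.
  rewrite card_gt0 => /set0Pn[y]; rewrite !inE => /andP[yR /existsP[x' /andP[]]].
  rewrite inE => /eqP -> axy.
  have [h2 [h2P h2I]] : exists h : W -> W, (forall z, z \in L :\ x -> (h z \in Rt :\ y) && adj z (h z)) /\ {in L :\ x &, injective h}.
    apply: (IH (L :\ x) (Rt :\ y)).
      by move: hL; rewrite (cardsD1 x L) xL add1n ltnS.
    move=> X XL.
    case: (boolP (X == set0)) => [/eqP -> | Xn]; first by rewrite cards0.
    have XL' : X \subset L by rewrite (subset_trans XL) // subsetDl.
    have XnL : X != L.
      apply/negP => /eqP E; move: (subsetP XL x); rewrite E xL !inE eqxx => /(_ isT).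
      done.
    have := notight X; rewrite XL' Xn XnL /= -ltnNge => lt.
    have : NB Rt X :\ y \subset NB (Rt :\ y) X.
      apply/subsetP => z; rewrite !inE => /andP[zy /andP[zR ex]]; by rewrite zy zR.
    move/subset_leq_card; apply: leq_trans.
    move: lt; rewrite (cardsD1 y (NB Rt X)); case: (y \in NB Rt X); rewrite /= ?add1n ?add0n => h; [by rewrite -ltnS | exact: ltnW].
  exists (fun z => if z == x then y else h2 z); split.
    move=> z zL; case: eqP => [->|/eqP zx]; first by rewrite yR axy.
    by case/andP: (h2P z ltac:(by rewrite !inE zx zL)); rewrite !inE => /andP[_ ->] ->.
  move=> z w zL wL /=; case: eqP => [->|/eqP zx]; case: eqP => [->|/eqP wx] //.
  + move=> E; case/andP: (h2P w ltac:(by rewrite !inE wx wL)); by rewrite -E !inE eqxx.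
  + move=> E; case/andP: (h2P z ltac:(by rewrite !inE zx zL)); by rewrite E !inE eqxx.
  + by apply: h2I; rewrite !inE ?zx ?wx ?zL ?wL.
Qed.
End Hall.


Section Gallai.
Variables (W : finType) (adj : rel W) (side : W -> bool) (Z : {set W}).
Hypothesis adjC : forall a b, adj a b = adj b a.
Hypothesis adjS : forall a b, adj a b -> side a != side b.
Hypothesis hZ : forall w, w \in Z -> exists2 w', w' \in Z & adj w w'.

Definition indep (S : {set W}) := (S \subset Z) && [forall a in S, forall b in S, ~~ adj a b].

Lemma indepP (S : {set W}) : reflect (S \subset Z /\ forall a b, a \in S -> b \in S -> ~~ adj a b) (indep S).
Proof.
apply: (iffP andP) => [[SZ /forallP H]|[SZ H]]; split => //.
  by move=> a b aS bS; move: (H a); rewrite aS => /forallP /(_ b); rewrite bS.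
by apply/forallP => a; apply/implyP => aS; apply/forallP => b; apply/implyP => bS; apply: H.
Qed.

Lemma gallai : exists S : {set W}, exists F : {set W * W},
   [/\ S \subset Z, (forall a b, a \in S -> b \in S -> ~~ adj a b),
       (forall e, e \in F -> [/\ adj e.1 e.2, e.1 \in Z & e.2 \in Z]),
       (forall w, w \in Z -> exists2 e, e \in F & (e.1 == w) || (e.2 == w)) &
       #|F| <= #|S|].
Proof.
have ind0 : indep set0 by apply/indepP; split => [|a b]; rewrite ?sub0set ?inE.
case: (@arg_maxnP _ set0 indep (fun S : {set W} => #|S|) ind0) => S /indepP[SZ Sind] maxS.
set C := Z :\: S.
have CS : [disjoint C & S].
  by rewrite -setI_eq0; apply/eqP/setP => x; rewrite !inE; case: (x \in S); rewrite ?andbF.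
have half : forall Xs : {set W}, forall b, Xs \subset C -> (forall x, x \in Xs -> side x = b) ->
    #|Xs| <= #|NB adj S Xs|.
  move=> Xs b XsC Xsb.
  set S' := (S :\: NB adj S Xs) :|: Xs.
  have indS' : indep S'.
    apply/indepP; split.
      rewrite subUset (subset_trans _ SZ) ?subsetDl //=.
      by apply: subset_trans XsC _; apply: subsetDl.
    have key : forall x y, x \in Xs -> y \in S :\: NB adj S Xs -> ~~ adj x y.
      move=> x y xX; rewrite !inE => /andP[yN yS]; apply/negP => axy.
      by move: yN; rewrite yS /=; move/negP; apply; apply/existsP; exists x; rewrite xX.
    move=> x y; rewrite !inE => /orP[xS|xX] /orP[yS|yX].
    - by apply: Sind; case/andP: xS; case/andP: yS.
    - by rewrite adjC; apply: key => //; rewrite !inE.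
    - by apply: key => //; rewrite !inE.
    - by apply/negP => /adjS; rewrite (Xsb _ xX) (Xsb _ yX) eqxx.
  have := maxS _ indS'.
  have dj : [disjoint S :\: NB adj S Xs & Xs].
    rewrite -setI_eq0; apply/eqP/setP => x; rewrite !inE; apply/negbTE; apply/negP.
    move=> /andP[/andP[_ xS] xX]; move: (subsetP XsC x xX); by rewrite inE xS.
  rewrite cardsU (disjoint_setI0 dj) cards0 subn0 cardsD (setIidPr (NB_sub _ _ _)).
  have := subset_leq_card (NB_sub adj S Xs).
  move: (#|NB adj S Xs|) (#|S|) (#|Xs|) => a s x as_ .
  move=> H; have : s - a + x <= s - a + a by rewrite subnK.
  by rewrite leq_add2l.
have hallc : forall X : {set W}, X \subset C -> #|X| <= #|NB adj S X|.
  move=> X XC.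
  set X0 := [set x in X | ~~ side x]; set X1 := [set x in X | side x].
  have X0C : X0 \subset C by apply: subset_trans XC; apply/subsetP => x; rewrite inE => /andP[].
  have X1C : X1 \subset C by apply: subset_trans XC; apply/subsetP => x; rewrite inE => /andP[].
  have h0 := half X0 false X0C (fun x xX => ltac:(by move: xX; rewrite inE => /andP[_ /negbTE])).
  have h1 := half X1 true X1C (fun x xX => ltac:(by move: xX; rewrite inE => /andP[_ ->])).
  have eX : #|X| = #|X0| + #|X1|.
    rewrite -(cardsID [set x | side x] X) addnC; congr (_ + _); apply: eq_card => x; rewrite !inE.
      by rewrite andbC.
    by rewrite andbC.
  have dN : [disjoint NB adj S X0 & NB adj S X1].
    rewrite -setI_eq0; apply/eqP/setP => y; rewrite !inE; apply/negbTE/negP.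
    case/andP=> /andP[_ /existsP[x0 /andP[]]]; rewrite inE => /andP[_ s0] a0.
    case/andP=> _ /existsP[x1 /andP[]]; rewrite inE => /andP[_ s1] a1.
    move: (adjS a0) (adjS a1); rewrite (negbTE s0) s1; by case: (side y).
  have sub : NB adj S X0 :|: NB adj S X1 \subset NB adj S X.
    by rewrite subUset !NBS //; apply/subsetP => x; rewrite inE => /andP[].
  rewrite eX; apply: leq_trans (subset_leq_card sub).
  by rewrite cardsU (disjoint_setI0 dN) cards0 subn0 leq_add.
have [h [hP hI]] := hall (leqnn #|C|) hallc.
pose nb w := odflt w [pick w' in Z | adj w w'].
have nbP : forall w, w \in Z -> (nb w \in Z) && adj w (nb w).
  move=> w wZ; rewrite /nb; case: pickP => [w' /andP[-> ->] //| none].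
  by case: (hZ wZ) => w' w'Z a; move: (none w'); rewrite w'Z a.
pose k w := if w \in C then h w else nb w.
set Dom := C :|: (S :\: h @: C).
exists S, [set (w, k w) | w in Dom]; split => //.
- move=> e /imsetP[w wD ->] /=; rewrite /k.
  have wZ : w \in Z.
    move: wD; rewrite !inE => /orP[/andP[_ ->] //| /andP[_ wS]]; exact: (subsetP SZ).
  case: ifP => wC.
    by case/andP: (hP w wC) => hS ->; rewrite wZ (subsetP SZ).
  by case/andP: (nbP w wZ) => -> ->; rewrite wZ.
- move=> w wZ.
  case: (boolP (w \in C)) => wC.
    exists (w, k w); last by rewrite eqxx.
    by apply: imset_f; rewrite inE wC.
  have wS : w \in S by move: wC; rewrite inE wZ andbT negbK.
  case: (boolP (w \in h @: C)) => [/imsetP[c cC ->]|wh].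
    exists (c, k c); last by rewrite /k cC eqxx orbT.
    by apply: imset_f; rewrite inE cC.
  exists (w, k w); last by rewrite eqxx.
  by apply: imset_f; rewrite !inE wh wS orbT.
- apply: leq_trans (leq_imset_card _ _) _.
  have dj : [disjoint C & S :\: h @: C].
    rewrite -setI_eq0; apply/eqP/setP => x; rewrite !inE; apply/negbTE/negP.
    by case/andP=> /andP[xS _] /andP[_ xS']; move: xS; rewrite xS'.
  have hCS : h @: C \subset S.
    by apply/subsetP => y /imsetP[c cC ->]; case/andP: (hP c cC).
  rewrite cardsU (disjoint_setI0 dj) cards0 subn0 cardsD (setIidPr hCS).
  rewrite (card_in_imset hI) subnKC //.
  by rewrite -(card_in_imset hI) subset_leq_card.
Qed.
End Gallai.


Local Open Scope ring_scope.
Section CS.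
Variable R : realType.

Lemma lagrange (A : finType) (p q : A -> R) :
  \sum_a \sum_b (p a * q b - p b * q a) ^+ 2 =
  2%:R * ((\sum_a p a ^+ 2) * (\sum_a q a ^+ 2) - (\sum_a p a * q a) ^+ 2).
Proof.
have E : forall a b, (p a * q b - p b * q a) ^+ 2 =
   p a ^+ 2 * q b ^+ 2 + p b ^+ 2 * q a ^+ 2 - 2%:R * ((p a * q a) * (p b * q b)).
  by move=> a b; ring.
have D2 : forall (f g : A -> R), \sum_a \sum_b f a * g b = (\sum_a f a) * (\sum_b g b).
  by move=> f g; rewrite mulr_suml; apply: eq_bigr => a _; rewrite mulr_sumr.
transitivity (\sum_a \sum_b (p a ^+ 2 * q b ^+ 2) + \sum_a \sum_b (q a ^+ 2 * p b ^+ 2)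
   - 2%:R * \sum_a \sum_b ((p a * q a) * (p b * q b))).
  rewrite mulr_sumr -big_split -sumrB /=; apply: eq_bigr => a _.
  rewrite mulr_sumr -big_split -sumrB /=; apply: eq_bigr => b _.
  by rewrite E; ring.
rewrite !D2 expr2; ring.
Qed.

Lemma cs_sqrt (A : finType) (p q : A -> R) :
  (forall a, 0 <= p a) -> (forall a, 0 <= q a) ->
  \sum_a p a * q a <= Num.sqrt (\sum_a p a ^+ 2) * Num.sqrt (\sum_a q a ^+ 2).
Proof.
move=> p0 q0.
have P0 : 0 <= \sum_a p a ^+ 2 by apply: sumr_ge0 => a _; apply: sqr_ge0.
have Q0 : 0 <= \sum_a q a ^+ 2 by apply: sumr_ge0 => a _; apply: sqr_ge0.
have S0 : 0 <= \sum_a p a * q a by apply: sumr_ge0 => a _; apply: mulr_ge0.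
have H : (\sum_a p a * q a) ^+ 2 <= (\sum_a p a ^+ 2) * (\sum_a q a ^+ 2).
  have L := lagrange p q.
  have : 0 <= \sum_a \sum_b (p a * q b - p b * q a) ^+ 2.
    by apply: sumr_ge0 => a _; apply: sumr_ge0 => b _; apply: sqr_ge0.
  rewrite L pmulr_rge0 ?ltr0n // subr_ge0 //.
rewrite -sqrtrM // -(ger0_norm S0) -sqrtr_sqr.
by apply: ler_wsqrtr.
Qed.

Lemma le_sqrt_sum (A : finType) (h : A -> R) (a : A) :
  (forall b, 0 <= h b) -> h a <= Num.sqrt (\sum_b h b ^+ 2).
Proof.
move=> h0; rewrite -(ger0_norm (h0 a)) -sqrtr_sqr; apply: ler_wsqrtr.
rewrite (bigD1 a) //= lerDl; apply: sumr_ge0 => b _; apply: sqr_ge0.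
Qed.

Lemma gen_cs (A I : finType) (C : {set I}) (h : I -> A -> R) (i1 i2 : I) :
  i1 \in C -> i2 \in C -> i1 != i2 -> (forall i a, 0 <= h i a) ->
  \sum_a \prod_(i in C) h i a <= \prod_(i in C) Num.sqrt (\sum_a h i a ^+ 2).
Proof.
move=> i1C i2C ne h0.
have i2C' : i2 \in C :\ i1 by rewrite !inE eq_sym ne.
set rest := (C :\ i1) :\ i2.
have E : forall (F : I -> R), \prod_(i in C) F i = F i1 * (F i2 * \prod_(i in rest) F i).
  move=> F; rewrite (bigD1 i1) //=; congr (_ * _).
  rewrite (bigD1 i2) /=; last by rewrite i2C eq_sym ne.
  congr (_ * _); apply: eq_bigl => i; rewrite /rest !inE; by case: (i == i2); case: (i == i1); rewrite ?andbF ?andbT /=.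
rewrite E.
apply: (@le_trans _ _ (\sum_a h i1 a * (h i2 a * \prod_(i in rest) Num.sqrt (\sum_b h i b ^+ 2)))).
  apply: ler_sum => a _; rewrite E; apply: (ler_wpM2l (h0 i1 a)); apply: (ler_wpM2l (h0 i2 a)).
  apply: ler_prod => i _; rewrite h0 /=; exact: le_sqrt_sum.
have Pr : 0 <= \prod_(i in rest) Num.sqrt (\sum_b h i b ^+ 2).
  by apply: prodr_ge0 => i _; apply: sqrtr_ge0.
set P := \prod_(i in rest) _.
rewrite (eq_bigr (fun a => h i1 a * h i2 a * P)); last by move=> a _; rewrite mulrA.
rewrite -mulr_suml mulrA; apply: ler_wpM2r => //.
exact: cs_sqrt.
Qed.
End CS.


Section Ext.
Variables (V D' : finType).
Definition ext (X : {set V}) (t0 : {ffun V -> D'}) : {set {ffun V -> D'}} :=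
  [set t : {ffun V -> D'} | [forall x, (x \notin X) ==> (t x == t0 x)]].
Definition upd (t0 : {ffun V -> D'}) (x : V) (a : D') : {ffun V -> D'} :=
  [ffun z => if z == x then a else t0 z].

Lemma ext0 t0 : ext set0 t0 = [set t0].
Proof.
apply/setP => t; rewrite !inE; apply/forallP/eqP => [H|->]; last by move=> x; rewrite eqxx implybT.
by apply/ffunP => x; move: (H x); rewrite inE /= => /eqP.
Qed.

Lemma ext_split (R : realType) (phi : {ffun V -> D'} -> R) (X : {set V}) (t0 : {ffun V -> D'}) (x : V) : x \in X ->
  \sum_(t in ext X t0) phi t = \sum_a \sum_(t in ext (X :\ x) (upd t0 x a)) phi t.
Proof.
move=> xX; rewrite (partition_big (fun t : {ffun V -> D'} => t x) predT) //=.
apply: eq_bigr => a _; apply: eq_bigl => t; rewrite !inE.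
apply/andP/forallP => [[/forallP H /eqP tx] z|H].
  rewrite /upd ffunE !inE negb_and negbK.
  case: eqP => [->|/eqP zx] /=; first by rewrite tx eqxx.
  exact: (H z).
split.
  apply/forallP => z; apply/implyP => zX; move: (H z); rewrite /upd !inE ffunE negb_and negbK.
  by case: eqP => [zx|_]; [move: zX; rewrite zx xX | rewrite zX].
by move: (H x); rewrite /upd !inE ffunE eqxx.
Qed.
End Ext.

Section Finner.
Variables (R : realType) (V D' I : finType).
Variables (g : I -> {ffun V -> D'} -> R) (M : I -> {set V} -> {ffun V -> D'} -> R)
  (cov : I -> {set V}) (adm : {set V} -> Prop).
Hypothesis g0 : forall i t, 0 <= g i t.
Hypothesis M0 : forall i X t, 0 <= M i X t.
Hypothesis Hbase : forall i t, g i t <= Num.sqrt (M i set0 t).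
Hypothesis Hstep : forall X, adm X -> X != set0 -> exists2 x, x \in X &
  [/\ adm (X :\ x), (1 < #|[set i | x \in cov i]|)%N,
      forall i t0, x \in cov i -> \sum_a M i (X :\ x) (upd t0 x a) <= M i X t0 &
      forall i t0 a, x \notin cov i -> M i (X :\ x) (upd t0 x a) <= M i X t0].

Lemma finner n : forall X : {set V}, #|X| = n -> adm X -> forall t0,
  \sum_(t in ext X t0) \prod_i g i t <= \prod_i Num.sqrt (M i X t0).
Proof.
elim: n => [|n IH] X cX aX t0.
  move/eqP: cX; rewrite cards_eq0 => /eqP ->.
  rewrite ext0 big_set1; apply: ler_prod => i _; rewrite g0; exact: Hbase.
have Xn : X != set0 by rewrite -card_gt0 cX.
case: (Hstep aX Xn) => x xX [aX' c2 P1 P2].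
have cX' : #|X :\ x| = n by move: cX; rewrite (cardsD1 x X) xX add1n => -[].
rewrite (ext_split _ _ xX).
apply: (@le_trans _ _ (\sum_a \prod_i Num.sqrt (M i (X :\ x) (upd t0 x a)))).
  by apply: ler_sum => a _; apply: IH.
set C := [set i | x \in cov i].
rewrite (bigID (mem C)) /=.
apply: (@le_trans _ _ (\sum_a ((\prod_(i in C) Num.sqrt (M i (X :\ x) (upd t0 x a))) *
          \prod_(i | i \notin C) Num.sqrt (M i X t0)))).
  apply: ler_sum => a _; rewrite (bigID (mem C)) /=; apply: ler_wpM2l.
    by apply: prodr_ge0 => i _; apply: sqrtr_ge0.
  apply: ler_prod => i; rewrite inE => ic; rewrite sqrtr_ge0 /= ler_wsqrtr //.
  exact: P2.
rewrite -mulr_suml; apply: ler_wpM2r; first by apply: prodr_ge0 => i _; apply: sqrtr_ge0.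
case/card_gt1P: c2 => i1 [i2 [i1C i2C ne]].
apply: le_trans (gen_cs i1C i2C ne (fun i a => sqrtr_ge0 _)) _.
apply: ler_prod => i iC; rewrite sqrtr_ge0 /= ler_wsqrtr //.
under eq_bigr => a _ do rewrite sqr_sqrtr //.
by apply: P1; move: iC; rewrite inE.
Qed.
End Finner.


Lemma card_sum (A B : finType) (P : {set A}) (f : A -> B) :
  (\sum_b #|[set p in P | f p == b]| = #|P|)%N.
Proof.
rewrite -sum1_card (partition_big f predT) //=; apply: eq_bigr => b _.
by rewrite -sum1_card; apply: eq_bigl => p; rewrite inE.
Qed.

Section Main.
Variables (R : realType) (V D Rel : finType) (src dst : Rel -> V)
  (inst : Rel -> {set D * D}) (N : nat) (U : {set V}).
Hypothesis hneq : forall r, src r != dst r.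
Hypothesis hN : (1 <= N)%N.
Hypothesis hsize : forall r, (#|inst r| <= N)%N.
Hypothesis h1 : forall y, y \notin U ->
     exists r, (src r \in U /\ dst r = y) \/ (dst r \in U /\ src r = y).
Hypothesis h2 : forall r, (src r \in U -> dst r \notin U -> light R src dst inst N r (src r)) /\
             (dst r \in U -> src r \notin U -> light R src dst inst N r (dst r)).

Local Notation J := (joinAttrs src dst U).
Local Notation T := (joinT src dst inst U).

Lemma touchJ r : touches src dst U r -> (src r \in J) && (dst r \in J).
Proof.
by move=> tr; rewrite !inE; apply/andP; split; apply/existsP; exists r; rewrite tr eqxx ?orbT.
Qed.

Lemma notUJ y : y \notin U -> y \in J.
Proof.
move=> yU; case: (h1 yU) => r [[sU <-]|[dU <-]].
  by case/andP: (@touchJ r ltac:(by rewrite /touches sU)).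
by case/andP: (@touchJ r ltac:(by rewrite /touches dU orbT)).
Qed.

Definition qadj (x y : V) := [exists r, ((src r == x) && (dst r == y)) || ((src r == y) && (dst r == x))].
Definition adjK (w w' : V * bool) := (w.2 != w'.2) && qadj w.1 w'.1.

Lemma adjKC a b : adjK a b = adjK b a.
Proof.
rewrite /adjK eq_sym; congr (_ && _); apply/existsP/existsP => -[r Hr]; exists r; by rewrite orbC.
Qed.

Lemma adjKS a b : adjK a b -> a.2 != b.2.
Proof. by case/andP. Qed.

Definition Z : {set V * bool} := [set w | w.1 \in J].

Lemma hZ w : w \in Z -> exists2 w', w' \in Z & adjK w w'.
Proof.
rewrite !inE => /existsP[r /andP[tr /orP[]/eqP E]].
- exists (dst r, ~~ w.2); first by case/andP: (touchJ tr) => _ H; rewrite inE.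
  by rewrite /adjK /=; case: (w.2) => /=; apply/existsP; exists r; rewrite E !eqxx.
- exists (src r, ~~ w.2); first by case/andP: (touchJ tr) => H _; rewrite inE.
  by rewrite /adjK /=; case: (w.2) => /=; apply/existsP; exists r; rewrite E !eqxx orbT.
Qed.


Inductive fdesc := FTriv | FStd of Rel | FLight of Rel & V.

Definition touchE (e : (V * bool) * (V * bool)) := (e.1.1 \in U) || (e.2.1 \in U).
Definition pickrel (x y : V) : option Rel :=
  [pick r | ((src r == x) && (dst r == y)) || ((src r == y) && (dst r == x))].
Definition lightrel (y : V) : option Rel :=
  [pick r | ((src r \in U) && (dst r == y)) || ((dst r \in U) && (src r == y))].

Definition relb (r : Rel) (t : {ffun V -> option D}) : bool :=
  [exists p in inst r, (t (src r) == Some p.1) && (t (dst r) == Some p.2)].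
Definition relg (r : Rel) (t : {ffun V -> option D}) : R := (relb r t)%:R.
Definition relcount (r : Rel) (X : {set V}) (t0 : {ffun V -> option D}) : nat :=
  #|[set p in inst r | ((src r \in X) || (t0 (src r) == Some p.1)) &&
                       ((dst r \in X) || (t0 (dst r) == Some p.2))]|.

Lemma relg01 r t : relg r t = 0 \/ relg r t = 1.
Proof. by rewrite /relg; case: (relb r t); [right|left]. Qed.

Lemma relg_ge0 r t : 0 <= relg r t.
Proof. by rewrite /relg ler0n. Qed.

Lemma relg_le_sqrt r t : relg r t <= Num.sqrt (relg r t).
Proof. by case: (relg01 r t) => ->; rewrite ?sqrtr0 ?sqrtr1. Qed.

Lemma relcount_base r t : relg r t <= Num.sqrt (relcount r set0 t)%:R.
Proof.
rewrite /relg /relb; case: existsP => [[p /andP[pin /andP[e1 e2]]]|_]; last by rewrite sqrtr_ge0.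
apply: (@le_trans _ _ (Num.sqrt 1)); first by rewrite sqrtr1.
apply: ler_wsqrtr; rewrite ler1n card_gt0; apply/set0Pn; exists p.
by rewrite !inE pin e1 e2 orbT.
Qed.

Lemma relcount_P1 r (X : {set V}) (t0 : {ffun V -> option D}) (x : V) : x \in X -> x \in [set src r; dst r] ->
  (\sum_a relcount r (X :\ x) (upd t0 x a) = relcount r X t0)%N.
Proof.
move=> xX; rewrite !inE => /orP[]/eqP E; subst x.
- rewrite [RHS]/relcount -(card_sum _ (fun p : D * D => Some p.1)); apply: eq_bigr => a _; apply: eq_card => p.
  rewrite !inE /upd !ffunE eqxx (eq_sym (dst r)) (negbTE (hneq r)) xX /= (eq_sym a).
  by case: (p \in inst r) => //=; rewrite andbC.
- rewrite [RHS]/relcount -(card_sum _ (fun p : D * D => Some p.2)); apply: eq_bigr => a _; apply: eq_card => p.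
  rewrite !inE /upd !ffunE eqxx (negbTE (hneq r)) xX /= (eq_sym a).
  by rewrite andbT andbA.
Qed.

Lemma relcount_P2 r (X : {set V}) (t0 : {ffun V -> option D}) (x : V) (a : option D) : x \notin [set src r; dst r] ->
  relcount r (X :\ x) (upd t0 x a) = relcount r X t0.
Proof.
rewrite !inE negb_or => /andP[xs xd]; apply: eq_card => p.
by rewrite !inE /upd !ffunE !(eq_sym _ x) (negbTE xs) (negbTE xd).
Qed.

Lemma relg_upd r (t0 : {ffun V -> option D}) (x : V) (a : option D) : x != src r -> x != dst r -> relg r (upd t0 x a) = relg r t0.
Proof.
move=> xs xd; rewrite /relg /relb /upd !ffunE !(eq_sym _ x) (negbTE xs) (negbTE xd) //.
Qed.

Lemma light_sum r (y : V) (t0 : {ffun V -> option D}) : y \notin U ->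
  ((src r \in U /\ dst r = y) \/ (dst r \in U /\ src r = y)) ->
  \sum_a relg r (upd t0 y a) <= Num.sqrt N%:R.
Proof.
move=> yU [[sU dy]|[dU sy]].
- have lr := (h2 r).1 sU ltac:(by rewrite dy).
  apply: (@le_trans _ _ (#|[set p in inst r | t0 (src r) == Some p.1]|)%:R).
    rewrite -(card_sum _ (fun p : D * D => Some p.2)) natr_sum; apply: ler_sum => a _.
    rewrite /relg /relb; case: existsP => [[p /andP[pin /andP[e1 e2]]]|_]; last by rewrite ler0n.
    rewrite ler1n card_gt0; apply/set0Pn; exists p.
    move: e1 e2; rewrite /upd !ffunE -dy eqxx (negbTE (hneq r)) => e1 /eqP ->.
    by rewrite !inE pin e1 eqxx.
  case E : (t0 (src r)) => [b|].
    apply: le_trans (lr b); rewrite /degree eqxx ler_nat.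
    apply/subset_leq_card/subsetP => p; rewrite !inE => /andP[pin /eqP[eb]]; by rewrite pin eb eqxx.
  rewrite (_ : [set _ in _ | _] = set0) ?cards0 ?sqrtr_ge0 //.
  by apply/setP => p; rewrite !inE andbF.
- have lr := (h2 r).2 dU ltac:(by rewrite sy).
  apply: (@le_trans _ _ (#|[set p in inst r | t0 (dst r) == Some p.2]|)%:R).
    rewrite -(card_sum _ (fun p : D * D => Some p.1)) natr_sum; apply: ler_sum => a _.
    rewrite /relg /relb; case: existsP => [[p /andP[pin /andP[e1 e2]]]|_]; last by rewrite ler0n.
    rewrite ler1n card_gt0; apply/set0Pn; exists p.
    move: e1 e2; rewrite /upd !ffunE -sy eqxx (eq_sym (dst r)) (negbTE (hneq r)) => /eqP -> e2.
    by rewrite !inE pin e2 eqxx.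
  case E : (t0 (dst r)) => [b|].
    apply: le_trans (lr b); rewrite /degree eq_sym (negbTE (hneq r)) ler_nat.
    apply/subset_leq_card/subsetP => p; rewrite !inE => /andP[pin /eqP[eb]]; by rewrite pin eb eqxx.
  rewrite (_ : [set _ in _ | _] = set0) ?cards0 ?sqrtr_ge0 //.
  by apply/setP => p; rewrite !inE andbF.
Qed.

Definition admX (X : {set V}) : Prop := X \subset J /\ (X :&: U != set0 -> J :\: U \subset X).

Section Factors.
Variable F : {set (V * bool) * (V * bool)}.

Definition desc (i : ((V * bool) * (V * bool)) * bool) : fdesc :=
  let: (e, b) := i in
  if e \in F then
    (if touchE e then (if b then FTriv else oapp FStd FTriv (pickrel e.1.1 e.2.1))
     else let y := if b then e.2.1 else e.1.1 in oapp (fun r => FLight r y) FTriv (lightrel y))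
  else FTriv.

Definition gf i t : R := match desc i with FTriv => 1 | FStd r => relg r t | FLight r _ => relg r t end.
Definition Mf i X t0 : R := match desc i with
  | FTriv => 1 | FStd r => (relcount r X t0)%:R
  | FLight r y => if y \in X then Num.sqrt (N%:R) else relg r t0 end.
Definition covf i : {set V} := match desc i with
  | FTriv => set0 | FStd r => [set src r; dst r] | FLight _ y => [set y] end.


Hypothesis HF1 : forall e, e \in F -> [/\ adjK e.1 e.2, e.1 \in Z & e.2 \in Z].
Hypothesis HF2 : forall w, w \in Z -> exists2 e, e \in F & (e.1 == w) || (e.2 == w).

Lemma desc_std i r : desc i = FStd r -> touches src dst U r /\
   ((src r == i.1.1.1) && (dst r == i.1.2.1) || (src r == i.1.2.1) && (dst r == i.1.1.1)).
Proof.
case: i => e b /=; case: ifP => // eF; case: ifP => tE; last by case: (lightrel _).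
case: b => //; rewrite /pickrel; case: pickP => // r' Hr [<-]; split => //.
by move: tE Hr; rewrite /touchE /touches => /orP[]H /orP[]/andP[/eqP-> /eqP->]; rewrite H ?orbT.
Qed.

Lemma desc_light i r y : desc i = FLight r y -> y \notin U /\
   ((src r \in U /\ dst r = y) \/ (dst r \in U /\ src r = y)).
Proof.
case: i => e b /=; case: ifP => // eF; case: ifP => tE.
  by case: b => //; case: (pickrel _ _).
move: tE; rewrite /touchE => /negbT; rewrite negb_or => /andP[n1 n2].
case: b => /=; rewrite /lightrel; case: pickP => // r' Hr [<- Ey];
  (split; [by rewrite -Ey | by case/orP: Hr => /andP[H /eqP E]; [left|right]; rewrite -Ey]).
Qed.

Lemma light_touch r y : ((src r \in U /\ dst r = y) \/ (dst r \in U /\ src r = y)) ->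
  touches src dst U r.
Proof. by rewrite /touches => -[[->]|[->]] //; rewrite orbT. Qed.

Lemma gf_ge0 i t : 0 <= gf i t.
Proof. by rewrite /gf; case: (desc i) => *; rewrite ?relg_ge0. Qed.

Lemma Mf_ge0 i X t : 0 <= Mf i X t.
Proof. by rewrite /Mf; case: (desc i) => *; rewrite ?ler0n //; case: ifP; rewrite ?sqrtr_ge0 ?relg_ge0. Qed.

Lemma Mf_base i t : gf i t <= Num.sqrt (Mf i set0 t).
Proof.
rewrite /gf /Mf; case: (desc i) => [|r|r y]; first by rewrite sqrtr1.
  exact: relcount_base.
by rewrite inE; apply: relg_le_sqrt.
Qed.

Lemma Mf_P1 i X t0 x : admX X -> x \in X -> x \in covf i ->
  \sum_a Mf i (X :\ x) (upd t0 x a) <= Mf i X t0.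
Proof.
move=> aX xX; rewrite /Mf /covf; case E: (desc i) => [|r|r y]; first by rewrite inE.
  by move=> xc; rewrite -natr_sum relcount_P1.
rewrite inE => /eqP xy; subst x; rewrite xX.
under eq_bigr => a _ do rewrite !inE eqxx /=.
by case: (desc_light E) => yU hr; apply: light_sum.
Qed.

Lemma Mf_P2 i X t0 x a : admX X -> x \in X -> x \notin covf i ->
  Mf i (X :\ x) (upd t0 x a) <= Mf i X t0.
Proof.
move=> [XJ aX] xX; rewrite /Mf /covf; case E: (desc i) => [|r|r y] //.
  by move=> xc; rewrite relcount_P2.
rewrite inE => xy; rewrite !inE (eq_sym y) xy /=.
case: ifP => yX //.
have yJU : y \in J :\: U by case: (desc_light E) => yU _; rewrite inE yU notUJ.
have XU : X :&: U = set0.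
  by case: (boolP (X :&: U == set0)) => [/eqP //|/aX /subsetP /(_ y yJU)]; rewrite yX.
have xU : x \notin U.
  by apply/negP => xU; move/setP: XU => /(_ x); rewrite !inE xX xU.
case: (desc_light E) => yU [[sU dy]|[dU sy]].
  by rewrite relg_upd // ?dy //; apply/negP => /eqP ex; move: xU; rewrite ex sU.
by rewrite relg_upd // ?sy //; apply/negP => /eqP ex; move: xU; rewrite ex dU.
Qed.


Definition idx (e : (V * bool) * (V * bool)) (w : V * bool) := (e, if touchE e then false else (e.2 == w)).

Lemma cov_idx e w : e \in F -> (e.1 == w) || (e.2 == w) -> w.1 \in covf (idx e w).
Proof.
move=> eF ew; case: (HF1 eF) => /andP[_ /existsP[r0 Hr0]] _ _.
rewrite /covf /idx /desc eF; case: ifP => tE; rewrite tE /=.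
  rewrite /pickrel; case: pickP => [r Hr /=|/(_ r0)]; last by rewrite Hr0.
  by case/orP: ew => /eqP <-; case/orP: Hr => /andP[/eqP -> /eqP ->]; rewrite !inE eqxx ?orbT.
move: tE; rewrite /touchE => /negbT; rewrite negb_or => /andP[n1 n2].
set y := if _ then _ else _.
have yw : y = w.1 by rewrite /y; case: eqP => [->//|ne]; case/orP: ew => /eqP E //; rewrite -E.
have yU : y \notin U by rewrite /y; case: ifP.
case: (h1 yU) => r1 Hr1.
rewrite /lightrel; case: pickP => [r Hr /=|/(_ r1)]; first by rewrite inE yw.
by case: Hr1 => -[-> ->]; rewrite eqxx ?orbT.
Qed.

Lemma cov2 x : x \in J -> (1 < #|[set i | x \in covf i]|)%N.
Proof.
move=> xJ.
have [e1 e1F h1e] := @HF2 (x, false) ltac:(by rewrite inE).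
have [e2 e2F h2e] := @HF2 (x, true) ltac:(by rewrite inE).
have ne : e1 != e2.
  apply/negP => /eqP E; subst e2.
  case: (HF1 e1F) => /andP[sd /existsP[r Hr]] _ _.
  move: sd Hr; case/orP: h1e => /eqP E1; case/orP: h2e => /eqP E2.
  + by move: E2; rewrite E1 => -[].
  + by rewrite E1 E2 /= => _ /orP[]/andP[/eqP a /eqP b]; move: (hneq r); rewrite a b eqxx.
  + by rewrite E1 E2 /= => _ /orP[]/andP[/eqP a /eqP b]; move: (hneq r); rewrite a b eqxx.
  + by move: E2; rewrite E1 => -[].
apply: (@leq_trans #|[set idx e1 (x, false); idx e2 (x, true)]|).
  by rewrite cards2; case: eqP => // -[E]; move: ne; rewrite E eqxx.
apply/subset_leq_card/subsetP => i; rewrite !inE => /orP[]/eqP ->.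
  exact: (cov_idx e1F h1e).
exact: (cov_idx e2F h2e).
Qed.

End Factors.

Lemma admX_J : admX J.
Proof. by split => // _; apply: subsetDl. Qed.

Lemma step (F : {set (V * bool) * (V * bool)}) : (forall e, e \in F -> [/\ adjK e.1 e.2, e.1 \in Z & e.2 \in Z]) ->
  (forall w, w \in Z -> exists2 e, e \in F & (e.1 == w) || (e.2 == w)) ->
  forall X, admX X -> X != set0 -> exists2 x, x \in X &
  [/\ admX (X :\ x), (1 < #|[set i | x \in covf F i]|)%N,
      forall i t0, x \in covf F i -> \sum_a Mf F i (X :\ x) (upd t0 x a) <= Mf F i X t0 &
      forall i t0 a, x \notin covf F i -> Mf F i (X :\ x) (upd t0 x a) <= Mf F i X t0].
Proof.
move=> HF1 HF2 X aX Xn.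
have [x xX ax] : exists2 x, x \in X & admX (X :\ x).
  case: aX => XJ aX.
  case: (boolP (X :&: U == set0)) => XU.
    case/set0Pn: Xn => x xX; exists x => //; split; first by rewrite (subset_trans _ XJ) ?subsetDl.
    move=> H; exfalso; move: H; apply/negP; rewrite negbK -subset0 -(eqP XU).
    by apply: setSI; apply: subsetDl.
  case/set0Pn: (XU) => x; rewrite inE => /andP[xX xU]; exists x => //; split.
    by rewrite (subset_trans _ XJ) ?subsetDl.
  move=> _; apply/subsetP => y yJU; rewrite !inE (subsetP (aX XU) y yJU) andbT.
  by apply/negP => /eqP E; move: yJU; rewrite E inE xU.
exists x => //; split => //.
- by apply: cov2 => //; exact: (subsetP aX.1).
- by move=> i t1 xc; apply: Mf_P1.
- by move=> i t1 a xc; apply: Mf_P2.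
Qed.

Lemma Mf_J (F : {set (V * bool) * (V * bool)}) i : Mf F i J ([ffun _ => None] : {ffun V -> option D}) <= (match desc F i with FTriv => 1 | FStd _ => N%:R | FLight _ _ => Num.sqrt N%:R end).
Proof.
rewrite /Mf; case E: (desc F i) => [|r|r y] //.
  case: (desc_std E) => tr _; case/andP: (touchJ tr) => sJ dJ.
  rewrite ler_nat /relcount (_ : [set _ in _ | _] = inst r) ?hsize //.
  by apply/setP => p; rewrite inE sJ dJ /= andbT.
by case: (desc_light E) => yU _; rewrite notUJ.
Qed.

Lemma main_bound : (#|T|%:R : R) <= AGM R src dst N.
Proof.
have [S [F [SZ Sind HF1 HF2 FS]]] := @gallai _ adjK (fun w => w.2) Z adjKC adjKS hZ.
set t0 : {ffun V -> option D} := [ffun _ => None].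
have fin := finner (@gf_ge0 F) (@Mf_ge0 F) (@Mf_base F) (step HF1 HF2) (erefl #|J|) admX_J t0.
have Tsub : forall t, t \in T -> t \in ext J t0.
  move=> t; rewrite !inE => /andP[/forallP H _]; apply/forallP => x; apply/implyP => xJ.
  by move: (H x); rewrite (negbTE xJ) ffunE; case: (t x).
have Tone : forall t, t \in T -> \prod_i gf F i t = 1.
  move=> t; rewrite inE => /andP[_ /forallP H]; apply: big1 => i _; rewrite /gf.
  have rel1 : forall r, touches src dst U r -> relg r t = 1.
    by move=> r tr; rewrite /relg /relb; move: (H r); rewrite tr /= => ->.
  case E: (desc F i) => [|r|r y] //.
    by case: (desc_std E) => tr _; apply: rel1.
  by case: (desc_light E) => _ hr; apply: rel1; apply: light_touch hr.
have HT : (#|T|%:R : R) <= \sum_(t in ext J t0) \prod_i gf F i t.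
  rewrite (bigID (mem T)) /= -[X in X <= _]addr0; apply: lerD.
    rewrite (eq_big (mem T) (fun _ => 1)); first by rewrite sumr_const.
      by move=> t /=; case: (boolP (t \in T)) => tT; rewrite ?andbF ?andbT ?Tsub.
    by move=> t /andP[_ tT]; apply: Tone.
  by apply: sumr_ge0 => t _; apply: prodr_ge0 => i _; apply: gf_ge0.
set P := \prod_i _ in fin.
have P0 : 0 <= P by apply: prodr_ge0 => i _; apply: sqrtr_ge0.
have N1 : 1 <= N%:R :> R by rewrite ler1n.
have HP : P ^+ 2 <= N%:R ^+ #|S|.
  rewrite /P -prodrXl.
  under eq_bigr => i _ do rewrite sqr_sqrtr ?Mf_ge0 //.
  have -> : \prod_i Mf F i J t0 = \prod_e \prod_b Mf F (e, b) J t0.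
    by rewrite pair_big /=; apply: eq_big => // -[e b].
  apply: (@le_trans _ _ (\prod_e (if e \in F then N%:R else 1))).
    apply: ler_prod => e _; rewrite big_bool; apply/andP; split.
      by apply: mulr_ge0; apply: Mf_ge0.
    have B1 := Mf_J F (e, true); have B2 := Mf_J F (e, false); rewrite -/t0 in B1 B2.
    have sN1 : 1 <= Num.sqrt N%:R :> R by apply: (@le_trans _ _ (Num.sqrt 1)); [rewrite sqrtr1 | apply: ler_wsqrtr].
    move: B1 B2; rewrite /desc; case: ifP => eF; last by move=> B1 B2; rewrite (le_trans (ler_pM (Mf_ge0 _ _ _ _) (Mf_ge0 _ _ _ _) B1 B2)) ?mulr1.
    case: ifP => tE.
      case: (pickrel _ _) => [r|] /= B1 B2; apply: (le_trans (ler_pM (Mf_ge0 _ _ _ _) (Mf_ge0 _ _ _ _) B1 B2)); by rewrite ?mul1r.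
    move=> B1 B2; apply: (le_trans (ler_pM (Mf_ge0 _ _ _ _) (Mf_ge0 _ _ _ _) B1 B2)).
    rewrite [X in _ <= X](_ : N%:R = Num.sqrt N%:R * Num.sqrt N%:R :> R); last by rewrite -expr2 sqr_sqrtr // ler0n.
    move: (Num.sqrt N%:R) sN1 => s s1.
    by case: (lightrel _) => [r|]; case: (lightrel _) => [r'|] /=; nra.
  rewrite -big_mkcond prodr_const (le_trans _ (ler_weXn2l N1 FS)) //.
have Tle : (#|T|%:R : R) <= P := le_trans HT fin.
have T2 : (#|T|%:R : R) ^+ 2 <= N%:R ^+ #|S|.
  by apply: le_trans HP; rewrite ler_pXn2r // nnegrE ?ler0n.
pose u x : R := (((x, false) \in S) + ((x, true) \in S))%:R / 2.
have upack : vertex_packing src dst u.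
  split.
    move=> x; rewrite /u.
    have : (((x, false) \in S) + ((x, true) \in S) <= 2)%N by case: (_ \in S); case: (_ \in S).
    rewrite -(ler_nat R) => H; have H0 : 0 <= ((((x, false) \in S) + ((x, true) \in S))%:R : R) by rewrite ler0n.
    by apply/andP; split; lra.
  move=> r.
  have q : qadj (src r) (dst r) by apply/existsP; exists r; rewrite !eqxx.
  have A1 : ~~ (((src r, false) \in S) && ((dst r, true) \in S)).
    by apply/negP => /andP[a b]; move: (Sind _ _ a b); rewrite /adjK /= q.
  have A2 : ~~ (((src r, true) \in S) && ((dst r, false) \in S)).
    by apply/negP => /andP[a b]; move: (Sind _ _ a b); rewrite /adjK /= q.
  have : (((src r, false) \in S) + ((src r, true) \in S) + (((dst r, false) \in S) + ((dst r, true) \in S)) <= 2)%N.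
    by move: A1 A2; case: (_ \in S); case: (_ \in S); case: (_ \in S); case: (_ \in S).
  rewrite -(ler_nat R) natrD /u => H; lra.
have usum : \sum_x u x = #|S|%:R / 2.
  rewrite /u -mulr_suml -natr_sum; congr (_%:R / 2).
  have -> : #|S| = (\sum_(w : V * bool) (w \in S : nat))%N.
    by rewrite -sum1_card big_mkcond /=; apply: eq_bigr => w _; case: (w \in S).
  transitivity (\sum_x \sum_b ((x, b) \in S : nat))%N.
    by apply: eq_bigr => x _; rewrite big_bool addnC.
  by rewrite pair_big /=; apply: eq_big => // -[x b].
set v := N%:R `^ (#|S|%:R / 2) : R.
have v0 : 0 <= v by apply: powR_ge0.
have v2 : v ^+ 2 = N%:R ^+ #|S|.
  rewrite -powR_mulrn // /v -powRrM divfK ?pnatr_eq0 // powR_mulrn //.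
have Tv : (#|T|%:R : R) <= v.
  by rewrite -(@ler_pXn2r _ 2) ?nnegrE ?ler0n // v2.
apply: le_trans Tv _.
rewrite /AGM.
have hs : has_sup [set y : R | exists u : V -> R,
         vertex_packing src dst u /\ y = (N%:R : R) `^ (\sum_(x : V) u x)]%classic.
  split; first by exists v, u; split => //; rewrite usum.
  exists (N%:R `^ #|V|%:R) => y [u' [[ub _] ->]].
  apply: ler_powR => //.
  apply: (@le_trans _ _ (\sum_(x : V) 1)).
    by apply: ler_sum => x _; case/andP: (ub x).
  by rewrite sumr_const.
apply: (sup_upper_bound hs); exists u; split => //; by rewrite usum.
Qed.

End Main.

End Helpers.
Local Open Scope ring_scope.

Theorem mainTheorem5 (R : realType) (V D Rel : finType) (src dst : Rel -> V)
  (inst : Rel -> {set D * D}) (N : nat) (U : {set V}) :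
  (forall r, src r != dst r) ->
  (1 <= N)%N ->
  (forall r, #|inst r| <= N)%N ->
  (* (1) every attribute outside U is joined by a relation to an attribute in U *)
  (forall y, y \notin U ->
     exists r, (src r \in U /\ dst r = y) \/ (dst r \in U /\ src r = y)) ->
  (* (2) every relation R(X,Y) with X in U, Y not in U is light in X *)
  (forall r, (src r \in U -> dst r \notin U -> light R src dst inst N r (src r)) /\
             (dst r \in U -> src r \notin U -> light R src dst inst N r (dst r))) ->
  (#|joinT src dst inst U|%:R : R) <= AGM R src dst N.
Proof.
move=> hneq hN hsize h1 h2.
exact: (@Helpers.main_bound R V D Rel src dst inst N U hneq hN hsize h1 h2).
Qed.
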